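(* Let $(X,f)$ be a dynamical system and let $x$ be a minimal point. Then for every $y$ with $(x,y)\in\mathrm{SProx}(f)$, the orbit closure $\overline{\{f^n(x):n\ge0\}}$ is the unique minimal set contained in $\overline{\{f^n(y):n\ge0\}}$. In particular, if $f(x)=x$, then (i) $x$ is the only minimal point in $\overline{\{f^n(y):n\ge0\}}$ for every $y\in\mathrm{SProx}(f)(x)$, and (ii) $\mathrm{SProx}(f)(x)=\bigcup_{y\in\mathrm{SProx}(f)(x)}\overline{\{f^n(y):n\ge0\}}$.
   Context: Dynamical system: compact metric space $X$ with metric $d$ and continuous $f$. A minimal set is a nonempty closed $f$-invariant set with no proper nonempty closed invariant subset; a minimal point is a point of some minimal set. $\mathrm{SProx}(f)=\{(x,y):\{n\in\mathbb N:d(f^nx,f^ny)<\varepsilon\}$ syndetic for every $\varepsilon>0\}$, where syndetic means meeting every subset of $\mathbb N$ with arbitrarily long runs of consecutive integers; $\mathrm{SProx}(f)(x)=\{y:(x,y)\in\mathrm{SProx}(f)\}$. *)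

(* Defs.v *)
From Stdlib Require Import Reals List.
Open Scope R_scope.

Definition is_metric {X : Type} (d : X -> X -> R) : Prop :=
  (forall x y, d x y = 0 <-> x = y) /\
  (forall x y, d x y = d y x) /\
  (forall x y z, d x z <= d x y + d y z).

Definition is_open {X : Type} (d : X -> X -> R) (U : X -> Prop) : Prop :=
  forall x, U x -> exists r, r > 0 /\ forall y, d x y < r -> U y.

Definition compact_space {X : Type} (d : X -> X -> R) : Prop :=
  forall (I : Type) (U : I -> X -> Prop),
    (forall i, is_open d (U i)) ->
    (forall x, exists i, U i x) ->
    exists l : list I, forall x, exists i, In i l /\ U i x.

Definition continuous_map {X : Type} (d : X -> X -> R) (f : X -> X) : Prop :=
  forall x eps, eps > 0 ->
    exists delta, delta > 0 /\ forall y, d x y < delta -> d (f x) (f y) < eps.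

Definition iterate {X : Type} (f : X -> X) (n : nat) (x : X) : X := Nat.iter n f x.

Definition closure {X : Type} (d : X -> X -> R) (A : X -> Prop) : X -> Prop :=
  fun z => forall eps, eps > 0 -> exists a, A a /\ d z a < eps.

Definition is_closed {X : Type} (d : X -> X -> R) (A : X -> Prop) : Prop :=
  forall z, closure d A z -> A z.

Definition invariant {X : Type} (f : X -> X) (A : X -> Prop) : Prop :=
  forall z, A z -> A (f z).

Definition subset {X : Type} (A B : X -> Prop) : Prop := forall z, A z -> B z.

Definition set_eq {X : Type} (A B : X -> Prop) : Prop := forall z, A z <-> B z.

Definition minimal_set {X : Type} (d : X -> X -> R) (f : X -> X) (M : X -> Prop) : Prop :=
  (exists z, M z) /\ is_closed d M /\ invariant f M /\
  forall N : X -> Prop, (exists z, N z) -> is_closed d N -> invariant f N ->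
    subset N M -> set_eq N M.

Definition minimal_point {X : Type} (d : X -> X -> R) (f : X -> X) (x : X) : Prop :=
  exists M, minimal_set d f M /\ M x.

Definition orbit_closure {X : Type} (d : X -> X -> R) (f : X -> X) (x : X) : X -> Prop :=
  closure d (fun z => exists n : nat, z = iterate f n x).

Definition thick (T : nat -> Prop) : Prop :=
  forall L : nat, exists n : nat, forall i : nat, (i < L)%nat -> T (n + i)%nat.

Definition syndetic (S : nat -> Prop) : Prop :=
  forall T, thick T -> exists n, S n /\ T n.

Definition SProx {X : Type} (d : X -> X -> R) (f : X -> X) (x y : X) : Prop :=
  forall eps, eps > 0 ->
    syndetic (fun n => d (iterate f n x) (iterate f n y) < eps).

(* Main.v *)
Require Import Defs.
From Stdlib Require Import Reals List Lra Lia Classical IndefiniteDescription.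
Open Scope R_scope.

Section Aux.
Variables (X : Type) (d : X -> X -> R) (f : X -> X).
Hypothesis hd : is_metric d.

Lemma d_refl z : d z z = 0.
Proof. destruct hd as [H _]. apply H; auto. Qed.
Lemma d_sym a b : d a b = d b a.
Proof. destruct hd as [_ [H _]]. apply H. Qed.
Lemma d_tri a b c : d a c <= d a b + d b c.
Proof. destruct hd as [_ [_ H]]. apply H. Qed.
Lemma d_nonneg a b : 0 <= d a b.
Proof. pose proof (d_tri a b a). rewrite d_refl, (d_sym b a) in H. lra. Qed.
Lemma d_zero a b : (forall e, e > 0 -> d a b < e) -> a = b.
Proof.
  intro H. destruct hd as [Hm _]. apply Hm.
  pose proof (d_nonneg a b). destruct (Rle_lt_or_eq_dec _ _ H0); [|auto].
  specialize (H _ r). lra.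
Qed.

Lemma iterate_add a b z : iterate f (a + b) z = iterate f a (iterate f b z).
Proof. unfold iterate. apply Nat.iter_add. Qed.

Hypothesis hf : continuous_map d f.

Lemma iter_cont n z eps : eps > 0 -> exists delta, delta > 0 /\
  forall v, d z v < delta -> d (iterate f n z) (iterate f n v) < eps.
Proof.
  revert eps; induction n; intros eps He.
  - exists eps; split; auto.
  - destruct (hf (iterate f n z) eps He) as [d1 [Hd1 H1]].
    destruct (IHn d1 Hd1) as [d2 [Hd2 H2]].
    exists d2; split; auto. intros v Hv. apply H1. apply H2; auto.
Qed.

Lemma iter_cont_fin L z eps : eps > 0 -> exists delta, delta > 0 /\
  forall v, d z v < delta -> forall i, (i < L)%nat ->
    d (iterate f i z) (iterate f i v) < eps.
Proof.
  intro He; induction L.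
  - exists 1; split; [lra|]. intros; lia.
  - destruct IHL as [d1 [Hd1 H1]].
    destruct (iter_cont L z eps He) as [d2 [Hd2 H2]].
    exists (Rmin d1 d2); split; [apply Rmin_glb_lt; auto|].
    intros v Hv i Hi.
    assert (d z v < d1) by (eapply Rlt_le_trans; [apply Hv| apply Rmin_l]).
    assert (d z v < d2) by (eapply Rlt_le_trans; [apply Hv| apply Rmin_r]).
    destruct (Nat.eq_dec i L); [subst; auto|]. apply H1; auto; lia.
Qed.

Lemma closure_closed A : is_closed d (closure d A).
Proof.
  intros z Hz e He. destruct (Hz (e/2)) as [a [Ha Hza]]; [lra|].
  destruct (Ha (e/2)) as [b [Hb Hab]]; [lra|].
  exists b; split; auto. pose proof (d_tri z a b). lra.
Qed.

Lemma closure_in A z : A z -> closure d A z.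
Proof. intros H e He. exists z; split; auto. rewrite d_refl; auto. Qed.

Lemma oc_self z : orbit_closure d f z z.
Proof. apply closure_in. exists 0%nat. reflexivity. Qed.

Lemma oc_iter z n : orbit_closure d f z (iterate f n z).
Proof. apply closure_in. exists n. reflexivity. Qed.

Lemma oc_closed z : is_closed d (orbit_closure d f z).
Proof. apply closure_closed. Qed.

Lemma oc_inv z : invariant f (orbit_closure d f z).
Proof.
  intros w Hw e He. destruct (hf w e He) as [de [Hde H]].
  destruct (Hw de Hde) as [a [[n Han] Hwa]]. subst a.
  exists (iterate f (S n) z). split. exists (S n); reflexivity. apply H; auto.
Qed.

Lemma inv_iter C : invariant f C -> forall n z, C z -> C (iterate f n z).
Proof. intros H n; induction n; intros z Hz; [exact Hz|]. change (C (f (iterate f n z))). apply H. apply IHn; auto. Qed.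

Lemma oc_min C z : is_closed d C -> invariant f C -> C z ->
  subset (orbit_closure d f z) C.
Proof.
  intros Hc Hi Hz w Hw. apply Hc. intros e He. destruct (Hw e He) as [a [[n Ha] H]].
  subst a. exists (iterate f n z); split; auto. apply inv_iter; auto.
Qed.

Lemma minset_eq M N : minimal_set d f M -> set_eq M N -> minimal_set d f N.
Proof.
  intros [[z Hz] [Hc [Hi Hm]]] Heq. split; [exists z; apply Heq; auto|].
  split; [|split].
  - intros w Hw. apply Heq. apply Hc. intros e He. destruct (Hw e He) as [a [Ha H]].
    exists a; split; auto. apply Heq; auto.
  - intros w Hw. apply Heq, Hi, Heq; auto.
  - intros P HP Pc Pi Ps w. split.
    + intro Hpw; apply Ps; auto.
    + intro Hw. apply Heq in Hw. apply (Hm P HP Pc Pi); auto.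
      intros u Hu. apply Heq. apply Ps; auto.
Qed.

Lemma minpt_oc z M : minimal_set d f M -> M z -> set_eq (orbit_closure d f z) M.
Proof.
  intros HM Hz. destruct HM as [_ [Hc [Hi Hm]]].
  apply Hm. exists z; apply oc_self. apply oc_closed. apply oc_inv.
  apply oc_min; auto.
Qed.

Lemma minpt_min z : minimal_point d f z -> minimal_set d f (orbit_closure d f z).
Proof.
  intros [M [HM Hz]]. apply (minset_eq M); auto.
  intro w; split; intro H; apply (minpt_oc z M HM Hz); auto.
Qed.

Lemma min_meet M M' : minimal_set d f M -> minimal_set d f M' ->
  (exists m, M m /\ M' m) -> set_eq M' M.
Proof.
  intros HM HM' [m [Hm Hm']].
  destruct HM as [_ [Mc [Mi Mm]]]. destruct HM' as [_ [M'c [M'i M'm]]].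
  assert (Hs : subset M' M).
  { intros w Hw. assert (set_eq (fun z => M z /\ M' z) M') as E.
    { apply M'm. exists m; auto.
      - intros u Hu; split; [apply Mc|apply M'c]; intros e He;
        destruct (Hu e He) as [a [[Ha1 Ha2] H]]; exists a; auto.
      - intros u [H1 H2]; split; auto.
      - intros u [H1 H2]; auto. }
    apply E in Hw. tauto. }
  apply Mm; auto. exists m; auto.
Qed.

Hypothesis hc : compact_space d.

Fixpoint maxN (l : list (X * R * nat)) : nat :=
  match l with nil => 0%nat | i :: l' => Nat.max (snd i) (maxN l') end.

Lemma maxN_in l i : In i l -> (snd i <= maxN l)%nat.
Proof. induction l; simpl; intros H; [contradiction|]. destruct H; subst; [lia|].
  specialize (IHl H); lia. Qed.

Lemma cluster (a : nat -> X) : exists m, forall e, e > 0 -> forall N,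
  exists k, (N <= k)%nat /\ d m (a k) < e.
Proof.
  apply NNPP; intro Hn.
  set (U := fun (i : X * R * nat) z =>
    let '(p, e, N) := i in e > 0 /\ (forall k, (N <= k)%nat -> e <= d p (a k)) /\ d p z < e).
  destruct (hc _ U) as [l Hl].
  - intros [[p e] N] z Hz. simpl in Hz. destruct Hz as [He [Hk Hpz]].
    exists (e - d p z); split; [lra|]. intros y Hy. simpl. split; auto. split; auto.
    pose proof (d_tri p z y); lra.
  - intro z. destruct (classic (exists e N, e > 0 /\
        forall k, (N <= k)%nat -> e <= d z (a k))) as [[e [N [He Hk]]]|H].
    + exists (z, e, N). simpl. split; auto. split; auto. rewrite d_refl; auto.
    + exfalso. apply Hn. exists z. intros e He N. apply NNPP; intro Hk.
      apply H. exists e, N. split; auto. intros k Hk'.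
      destruct (Rlt_or_le (d z (a k)) e); auto. exfalso; apply Hk; exists k; auto.
  - destruct (Hl (a (maxN l))) as [[[p e] N] [Hin HU]]. simpl in HU.
    destruct HU as [He [Hk Hp]]. apply maxN_in in Hin. simpl in Hin.
    specialize (Hk _ Hin). lra.
Qed.

Lemma meet_seq (A B : X -> Prop) (a b : nat -> X) :
  is_closed d A -> is_closed d B -> (forall k, A (a k)) -> (forall k, B (b k)) ->
  (forall k, d (a k) (b k) < / INR (S k)) -> exists m, A m /\ B m.
Proof.
  intros Ac Bc Ha Hb Hd. destruct (cluster a) as [m Hm]. exists m. split.
  - apply Ac. intros e He. destruct (Hm e He 0%nat) as [k [_ H]]. exists (a k); auto.
  - apply Bc. intros e He. destruct (archimed_cor1 (e/2)) as [N [HN HN0]]; [lra|].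
    destruct (Hm (e/2) ltac:(lra) N) as [k [Hk H]]. exists (b k); split; auto.
    assert (/ INR (S k) <= / INR N).
    { apply Rinv_le_contravar. apply lt_0_INR; lia. apply le_INR; lia. }
    specialize (Hd k). pose proof (d_tri m (a k) (b k)). lra.
Qed.

End Aux.

Lemma choice_nat (P : nat -> Prop) (Q : nat -> Prop) :
  (forall k, exists n, P n /\ Q k) -> True.
Proof. auto. Qed.

Lemma choice_fun {A B : Type} (P : A -> B -> Prop) :
  (forall a, exists b, P a b) -> exists g : A -> B, forall a, P a (g a).
Proof.
  intro H. exists (fun a => proj1_sig (constructive_indefinite_description _ (H a))).
  intro a. exact (proj2_sig (constructive_indefinite_description _ (H a))).
Qed.

Lemma iter_fix {X : Type} (f : X -> X) x n : f x = x -> iterate f n x = x.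
Proof. intro H; induction n; simpl; auto. unfold iterate in *; simpl. rewrite IHn; auto. Qed.

Theorem proposition7p4 (X : Type) (d : X -> X -> R) (f : X -> X)
  (hd : is_metric d) (hc : compact_space d) (hf : continuous_map d f)
  (x : X) (hx : minimal_point d f x) :
  (forall y, SProx d f x y ->
     minimal_set d f (orbit_closure d f x) /\
     subset (orbit_closure d f x) (orbit_closure d f y) /\
     (forall M, minimal_set d f M -> subset M (orbit_closure d f y) ->
        set_eq M (orbit_closure d f x))) /\
  (f x = x ->
     (forall y, SProx d f x y ->
        forall z, minimal_point d f z -> orbit_closure d f y z -> z = x) /\
     set_eq (SProx d f x)
       (fun z => exists y, SProx d f x y /\ orbit_closure d f y z)).
Proof.
  assert (MOmin := minpt_min X d f hd hf x hx).
  assert (P1 : forall y, SProx d f x y ->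
     minimal_set d f (orbit_closure d f x) /\
     subset (orbit_closure d f x) (orbit_closure d f y) /\
     (forall M, minimal_set d f M -> subset M (orbit_closure d f y) ->
        set_eq M (orbit_closure d f x))).
  { intros y Hy. split; auto. split.
    - (* proximal => meets *)
      assert (forall k, exists n, d (iterate f n x) (iterate f n y) < / INR (S k) /\ True) as Hs.
      { intro k. destruct (Hy (/ INR (S k))) with (T := fun _ : nat => True) as [n [H1 _]].
        apply Rinv_0_lt_compat, lt_0_INR; lia.
        intro L; exists 0%nat; auto. exists n; auto. }
      destruct (choice_fun _ Hs) as [s Hsk].
      destruct (meet_seq X d hd hc (orbit_closure d f x) (orbit_closure d f y)
        (fun k => iterate f (s k) x) (fun k => iterate f (s k) y)) as [m [Hm1 Hm2]].
      apply oc_closed; auto. apply oc_closed; auto.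
      intro; apply oc_iter; auto. intro; apply oc_iter; auto.
      intro k; apply Hsk.
      assert (E : set_eq (fun z => orbit_closure d f x z /\ orbit_closure d f y z)
                    (orbit_closure d f x)).
      { destruct MOmin as [_ [_ [_ Hm]]]. apply Hm.
        exists m; auto.
        - intros u Hu; split; apply oc_closed; auto; intros e He;
          destruct (Hu e He) as [a [[Ha1 Ha2] H]]; exists a; auto.
        - intros u [H1 H2]; split; apply oc_inv; auto.
        - intros u [H1 H2]; auto. }
      intros z Hz. apply E in Hz. tauto.
    - intros M HM HMK. apply (min_meet X d f (orbit_closure d f x) M); auto.
      assert (forall k, exists pq : X * X, M (fst pq) /\ orbit_closure d f x (snd pq) /\
                d (fst pq) (snd pq) < / INR (S k)) as Hs.
      { intro k. set (eps := / INR (S k)).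
        assert (Heps : eps > 0) by (apply Rinv_0_lt_compat, lt_0_INR; lia).
        clearbody eps.
        set (S0 := fun n => d (iterate f n x) (iterate f n y) < eps / 2).
        assert (Hsyn : syndetic S0) by (apply Hy; lra).
        assert (HL : exists L, forall n, exists i, (i < L)%nat /\ S0 (n + i)%nat).
        { apply NNPP; intro H. destruct (Hsyn (fun n => ~ S0 n)) as [n [h1 h2]]; [|tauto].
          intro L. apply NNPP; intro H2. apply H. exists L. intro n.
          apply NNPP; intro H3. apply H2. exists n. intros i Hi Si. apply H3.
          exists i; auto. }
        destruct HL as [L HL].
        destruct HM as [[w Hw] [_ [Mi _]]].
        destruct (iter_cont_fin X d f hf L w (eps/2)) as [de [Hde Hc]]; [lra|].
        destruct (HMK w Hw de Hde) as [a [[n Han] Hwa]]. subst a.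
        destruct (HL n) as [i [Hi Si]].
        exists (iterate f i w, iterate f (n + i) x). simpl. split; [|split].
        - apply inv_iter; auto.
        - apply oc_iter; auto.
        - specialize (Hc _ Hwa i Hi). unfold S0 in Si.
          rewrite Nat.add_comm, !iterate_add in Si. rewrite Nat.add_comm, iterate_add.
          pose proof (d_tri X d hd (iterate f i w) (iterate f i (iterate f n y))
                       (iterate f i (iterate f n x))).
          rewrite (d_sym X d hd (iterate f i (iterate f n y))) in H.  lra. }
      destruct (choice_fun _ Hs) as [g Hg].
      cut (exists m, M m /\ orbit_closure d f x m); [intros [m [? ?]]; exists m; auto|].
      apply (meet_seq X d hd hc M (orbit_closure d f x) (fun k => fst (g k)) (fun k => snd (g k))).
      + destruct HM as [_ [H _]]; auto.
      + apply oc_closed; auto.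
      + intro k; apply Hg.
      + intro k; apply Hg.
      + intro k; apply Hg. }
  split; [exact P1|]. intro Hfx. split.
  - intros y Hy z Hz Hzy.
    assert (E : set_eq (orbit_closure d f z) (orbit_closure d f x)).
    { apply (P1 y Hy). apply minpt_min; auto.
      apply oc_min; auto. apply oc_closed; auto. apply oc_inv; auto. }
    assert (H := proj1 (E z) (oc_self X d f hd z)).
    apply (d_zero X d hd). intros e He. destruct (H e He) as [a [[n Ha] Hza]].
    subst a. rewrite iter_fix in Hza; auto.
  - intro z. split.
    + intro Hz. exists z; split; auto. apply oc_self; auto.
    + intros [y [Hy Hzy]] eps He T HT.
      apply NNPP; intro Hn.
      destruct (Hy (eps/2) ltac:(lra) (fun n => ~ d (iterate f n x) (iterate f n y) < eps/2))
        as [n [h1 h2]]; [|tauto].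
      intro L. destruct (HT L) as [a Ha].
      destruct (iter_cont_fin X d f hf (a + L) z (eps/2)) as [de [Hde Hc]]; [lra|].
      destruct (Hzy de Hde) as [b [[m Hbm] Hzb]]. subst b.
      exists (a + m)%nat. intros i Hi Hlt.
      apply Hn. exists (a + i)%nat. split; [|apply Ha; auto].
      rewrite (iter_fix f x (a + i) Hfx). rewrite (iter_fix f x (a + m + i) Hfx) in Hlt.
      replace (a + m + i)%nat with ((a + i) + m)%nat in Hlt by lia.
      rewrite iterate_add in Hlt.
      specialize (Hc _ Hzb (a + i)%nat ltac:(lia)).
      pose proof (d_tri X d hd x (iterate f (a + i) (iterate f m y)) (iterate f (a + i) z)).
      rewrite (d_sym X d hd (iterate f (a + i) (iterate f m y))) in H. lra.
Qed.
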